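(* Let $K$ be a $b$-complete idempotent semiring and $X$ a nonempty set. The kernel theorem holds for a functional $b$-semimodule $V\subset K(X)$ if and only if the identity operator $\mathrm{id}\colon V\to V$ is integral.
   Context: Idempotent semigroup: commutative, associative, idempotent $\oplus$ with order $x\preceq y$ iff $x\oplus y=y$; $b$-complete: every bounded above subset (incl. $\emptyset$) has a least upper bound. A homomorphism of $b$-complete semigroups is a $b$-homomorphism if it preserves least upper bounds of bounded above subsets. Idempotent semiring: idempotent commutative associative $\oplus$, associative $\odot$ bi-distributive, unit $\mathbf 1$, zero $\mathbf 0$; $b$-complete if $b$-complete and $k\odot(\oplus X)=\oplus(k\odot X)$, $(\oplus X)\odot k=\oplus(X\odot k)$ for bounded $X$. Idempotent semimodule over $K$: idempotent semigroup with associative bi-distributive $K$-action, $\mathbf 1\odot x=x$, $\mathbf 0\odot x=\mathbf 0$; $b$-complete if $b$-complete as semigroup and $(\oplus Q)\odot x=\oplus(Q\odot x)$, $k\odot(\oplus X)=\oplus(k\odot X)$ for bounded $Q,X$. Linear: preserves $\oplus$ and scalar multiplication; $b$-linear: moreover a $b$-homomorphism. $K(X)$: all maps $X\to K$, pointwise operations; a functional $b$-semimodule on $X$ is a subset of $K(X)$ closed under pointwise $\oplus$ and scalar multiplication, which is a $b$-complete semimodule and whose embedding into $K(X)$ is a $b$-homomorphism. A mapping $A\colon V\to W$ is integral if there is $k\colon X\to W$ such that $\{f(x)\odot k(x)\mid x\in X\}$ is bounded for all $f\in V$ and $Af=\sup_{x\in X}(f(x)\odot k(x))$. The kernel theorem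 holds for $V$ if every $b$-linear mapping from $V$ to an arbitrary $b$-complete semimodule over $K$ is integral. *)

(* Defs.v *)
Set Implicit Arguments.

Section Order.
Variable T : Type.
Variable add : T -> T -> T.

Definition le (x y : T) : Prop := add x y = y.

Definition upper_bound_in (P S : T -> Prop) (u : T) : Prop :=
  P u /\ forall x, S x -> le x u.
Definition bounded_in (P S : T -> Prop) : Prop := exists u, upper_bound_in P S u.
Definition lub_in (P S : T -> Prop) (s : T) : Prop :=
  upper_bound_in P S s /\ forall u, upper_bound_in P S u -> le s u.

Definition all_T : T -> Prop := fun _ => True.
Definition bounded (S : T -> Prop) : Prop := bounded_in all_T S.
Definition is_lub (S : T -> Prop) (s : T) : Prop := lub_in all_T S s.

Definition b_complete : Prop :=
  forall S : T -> Prop, bounded S -> exists s, is_lub S s.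
End Order.

Definition image {A B : Type} (f : A -> B) (S : A -> Prop) : B -> Prop :=
  fun y => exists x, S x /\ y = f x.

Record IdemSemiring := {
  sr_car :> Type;
  sr_add : sr_car -> sr_car -> sr_car;
  sr_mul : sr_car -> sr_car -> sr_car;
  sr_one : sr_car;
  sr_zero : sr_car;
  sr_addA : forall a b c, sr_add a (sr_add b c) = sr_add (sr_add a b) c;
  sr_addC : forall a b, sr_add a b = sr_add b a;
  sr_addI : forall a, sr_add a a = a;
  sr_add0 : forall a, sr_add sr_zero a = a;
  sr_mulA : forall a b c, sr_mul a (sr_mul b c) = sr_mul (sr_mul a b) c;
  sr_mul1l : forall a, sr_mul sr_one a = a;
  sr_mul1r : forall a, sr_mul a sr_one = a;
  sr_mulDl : forall a b c, sr_mul (sr_add a b) c = sr_add (sr_mul a c) (sr_mul b c);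
  sr_mulDr : forall a b c, sr_mul a (sr_add b c) = sr_add (sr_mul a b) (sr_mul a c);
  sr_mul0l : forall a, sr_mul sr_zero a = sr_zero;
  sr_mul0r : forall a, sr_mul a sr_zero = sr_zero
}.

Definition b_complete_semiring (K : IdemSemiring) : Prop :=
  b_complete (sr_add K) /\
  (forall (k : K) (S : K -> Prop) (s : K),
      bounded (sr_add K) S -> is_lub (sr_add K) S s ->
      is_lub (sr_add K) (image (sr_mul K k) S) (sr_mul K k s) /\
      is_lub (sr_add K) (image (fun x => sr_mul K x k) S) (sr_mul K s k)).

Record Semimodule (K : IdemSemiring) := {
  sm_car :> Type;
  sm_add : sm_car -> sm_car -> sm_car;
  sm_zero : sm_car;
  sm_act : K -> sm_car -> sm_car;
  sm_addA : forall x y z, sm_add x (sm_add y z) = sm_add (sm_add x y) z;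
  sm_addC : forall x y, sm_add x y = sm_add y x;
  sm_addI : forall x, sm_add x x = x;
  sm_add0 : forall x, sm_add sm_zero x = x;
  sm_actA : forall a b x, sm_act (sr_mul K a b) x = sm_act a (sm_act b x);
  sm_actDl : forall a b x, sm_act (sr_add K a b) x = sm_add (sm_act a x) (sm_act b x);
  sm_actDr : forall a x y, sm_act a (sm_add x y) = sm_add (sm_act a x) (sm_act a y);
  sm_act1 : forall x, sm_act (sr_one K) x = x;
  sm_act0 : forall x, sm_act (sr_zero K) x = sm_zero
}.

Definition b_complete_semimodule (K : IdemSemiring) (W : Semimodule K) : Prop :=
  b_complete (sm_add W) /\
  (forall (Q : K -> Prop) (q : K) (x : W),
      bounded (sr_add K) Q -> is_lub (sr_add K) Q q ->
      is_lub (sm_add W) (image (fun k => sm_act W k x) Q) (sm_act W q x)) /\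
  (forall (k : K) (S : W -> Prop) (s : W),
      bounded (sm_add W) S -> is_lub (sm_add W) S s ->
      is_lub (sm_add W) (image (sm_act W k) S) (sm_act W k s)).

Section Functional.
Variable K : IdemSemiring.
Variable X : Type.

Definition padd (f g : X -> K) : X -> K := fun x => sr_add K (f x) (g x).
Definition pact (k : K) (f : X -> K) : X -> K := fun x => sr_mul K k (f x).
Definition pzero : X -> K := fun _ => sr_zero K.

Definition subset_of (S V : (X -> K) -> Prop) : Prop := forall f, S f -> V f.

(* V ⊂ K(X) is a functional b-semimodule: closed under pointwise ⊕ and scalar
   multiplication (and containing the zero function), a b-complete semimodule
   with the induced operations (sups and bounds taken inside V), and the
   embedding V -> K(X) is a b-homomorphism (sups in V of bounded subsets are
   sups in K(X)). *)
Definition functional_bsemimodule (V : (X -> K) -> Prop) : Prop :=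
  (forall f g, V f -> V g -> V (padd f g)) /\
  (forall k f, V f -> V (pact k f)) /\
  V pzero /\
  (forall S, subset_of S V -> bounded_in padd V S -> exists s, lub_in padd V S s) /\
  (forall (Q : K -> Prop) (q : K) f, V f ->
      bounded (sr_add K) Q -> is_lub (sr_add K) Q q ->
      lub_in padd V (image (fun k => pact k f) Q) (pact q f)) /\
  (forall k S s, subset_of S V -> bounded_in padd V S -> lub_in padd V S s ->
      lub_in padd V (image (pact k) S) (pact k s)) /\
  (forall S s, subset_of S V -> bounded_in padd V S -> lub_in padd V S s ->
      is_lub padd S s).

(* b-linear maps V -> W (a map is given on all of K(X); only its values on V
   matter). *)
Arguments b_complete_semimodule : clear implicits.
Definition b_linear (V : (X -> K) -> Prop) (W : Semimodule K) (A : (X -> K) -> W)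
  : Prop :=
  (forall f g, V f -> V g -> A (padd f g) = sm_add W (A f) (A g)) /\
  (forall k f, V f -> A (pact k f) = sm_act W k (A f)) /\
  (forall S s, subset_of S V -> bounded_in padd V S -> lub_in padd V S s ->
      is_lub (sm_add W) (image A S) (A s)).

(* Integrality of A : V -> W, where the target W is given as a subset inW of an
   ambient type with addition addW and scalar action actW (bounds and sups are
   taken inside inW). *)
Definition integral_in {W : Type} (inW : W -> Prop) (addW : W -> W -> W)
  (actW : K -> W -> W) (V : (X -> K) -> Prop) (A : (X -> K) -> W) : Prop :=
  exists k : X -> W, (forall x, inW (k x)) /\
    forall f, V f ->
      let T := fun w => exists x, w = actW (f x) (k x) in
      bounded_in addW inW T /\ lub_in addW inW T (A f).

Arguments b_linear : clear implicits.
Definition integral (V : (X -> K) -> Prop) (W : Semimodule K) (A : (X -> K) -> W)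
  : Prop := integral_in (all_T (T:=W)) (sm_add W) (sm_act W) V A.

Arguments integral : clear implicits.
Definition kernel_theorem_holds (V : (X -> K) -> Prop) : Prop :=
  forall (W : Semimodule K), b_complete_semimodule K W ->
    forall A : (X -> K) -> W, b_linear V W A -> integral V W A.

End Functional.

(* Main.v *)
Require Import Defs.
From Stdlib Require Import Classical ClassicalEpsilon FunctionalExtensionality ProofIrrelevance.
Set Implicit Arguments.

Definition Wc {K : IdemSemiring} {X : Type} (V : (X -> K) -> Prop) := {f : X -> K | V f}.

Definition wadd (K : IdemSemiring) (X : Type) (V : (X -> K) -> Prop)
  (HV : @functional_bsemimodule K X V) (a b : Wc V) : Wc V :=
  exist _ (padd _ (proj1_sig a) (proj1_sig b)) (proj1 HV _ _ (proj2_sig a) (proj2_sig b)).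
Definition wact (K : IdemSemiring) (X : Type) (V : (X -> K) -> Prop)
  (HV : @functional_bsemimodule K X V) (k : K) (a : Wc V) : Wc V :=
  exist _ (pact _ k (proj1_sig a)) (proj1 (proj2 HV) k _ (proj2_sig a)).
Definition wzero (K : IdemSemiring) (X : Type) (V : (X -> K) -> Prop)
  (HV : @functional_bsemimodule K X V) : Wc V :=
  exist _ (@pzero K X) (proj1 (proj2 (proj2 HV))).

Lemma wext (K : IdemSemiring) (X : Type) (V : (X -> K) -> Prop) (a b : Wc V) :
  proj1_sig a = proj1_sig b -> a = b.
Proof. destruct a, b; simpl; intros ->; f_equal; apply proof_irrelevance. Qed.

Ltac wsolve := intros; apply wext; simpl; apply functional_extensionality; intro;
  unfold padd, pact, pzero.

Definition mkW (K : IdemSemiring) (X : Type) (V : (X -> K) -> Prop)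
  (HV : @functional_bsemimodule K X V) : Semimodule K.
Proof.
  refine (@Build_Semimodule K (Wc V) (wadd HV) (wzero HV) (wact HV) _ _ _ _ _ _ _ _ _).
  - wsolve; apply sr_addA.
  - wsolve; apply sr_addC.
  - wsolve; apply sr_addI.
  - wsolve; apply sr_add0.
  - wsolve; symmetry; apply sr_mulA.
  - wsolve; apply sr_mulDl.
  - wsolve; apply sr_mulDr.
  - wsolve; apply sr_mul1l.
  - wsolve; apply sr_mul0l.
Defined.

Lemma le_tr (K : IdemSemiring) (X : Type) (V : (X -> K) -> Prop)
  (HV : @functional_bsemimodule K X V) (a b : Wc V) :
  le (wadd HV) a b <-> le (@padd K X) (proj1_sig a) (proj1_sig b).
Proof.
  unfold le; split; intro H.
  - apply (f_equal (@proj1_sig _ _)) in H; exact H.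
  - apply wext; exact H.
Qed.

Lemma ub_tr (K : IdemSemiring) (X : Type) (V : (X -> K) -> Prop)
  (HV : @functional_bsemimodule K X V) (S : Wc V -> Prop) (u : Wc V) :
  upper_bound_in (wadd HV) (all_T (T:=Wc V)) S u <->
  upper_bound_in (@padd K X) V (image (@proj1_sig _ _) S) (proj1_sig u).
Proof.
  unfold upper_bound_in; split.
  - intros [_ H]; split; [exact (proj2_sig u)|].
    intros g [w [Hw ->]]; apply (proj1 (le_tr HV w u)); auto.
  - intros [_ H]; split; [exact I|].
    intros w Hw; apply (proj2 (le_tr HV w u)), H; exists w; auto.
Qed.

Lemma bnd_tr (K : IdemSemiring) (X : Type) (V : (X -> K) -> Prop)
  (HV : @functional_bsemimodule K X V) (S : Wc V -> Prop) :
  bounded_in (wadd HV) (all_T (T:=Wc V)) S <->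
  bounded_in (@padd K X) V (image (@proj1_sig _ _) S).
Proof.
  unfold bounded_in; split.
  - intros [u Hu]; exists (proj1_sig u); apply (proj1 (ub_tr HV S u)); auto.
  - intros [u Hu]. pose proof (proj1 Hu) as Vu.
    exists (exist _ u Vu); apply (proj2 (ub_tr HV S (exist _ u Vu))); auto.
Qed.

Lemma lub_tr (K : IdemSemiring) (X : Type) (V : (X -> K) -> Prop)
  (HV : @functional_bsemimodule K X V) (S : Wc V -> Prop) (s : Wc V) :
  lub_in (wadd HV) (all_T (T:=Wc V)) S s <->
  lub_in (@padd K X) V (image (@proj1_sig _ _) S) (proj1_sig s).
Proof.
  unfold lub_in; split.
  - intros [H1 H2]; split; [apply (proj1 (ub_tr HV S s)); auto|].
    intros u Hu. pose proof (proj1 Hu) as Vu.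
    apply (proj1 (le_tr HV s (exist _ u Vu))). apply H2. apply (proj2 (ub_tr HV S (exist _ u Vu))); auto.
  - intros [H1 H2]; split; [apply (proj2 (ub_tr HV S s)); auto|].
    intros u Hu. apply (proj2 (le_tr HV s u)). apply H2. apply (proj1 (ub_tr HV S u)); auto.
Qed.

Lemma lub_ext (T : Type) (add : T -> T -> T) (P S1 S2 : T -> Prop) (s : T) :
  (forall g, S1 g <-> S2 g) -> lub_in add P S1 s -> lub_in add P S2 s.
Proof.
  intros E [[H0 H1] H2]; split; [split; auto; intros; apply H1, E; auto|].
  intros u [Hu Hu']; apply H2; split; auto; intros; apply Hu', E; auto.
Qed.

Lemma bnd_ext (T : Type) (add : T -> T -> T) (P S1 S2 : T -> Prop) :
  (forall g, S1 g <-> S2 g) -> bounded_in add P S1 -> bounded_in add P S2.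
Proof.
  intros E [u [H0 H1]]; exists u; split; auto; intros; apply H1, E; auto.
Qed.

Lemma lub_in_P (T : Type) (add : T -> T -> T) (P S : T -> Prop) (s : T) :
  lub_in add P S s -> P s.
Proof. intros [[H _] _]; exact H. Qed.

Theorem corollary7p30 (K : IdemSemiring) (HK : b_complete_semiring K)
  (X : Type) (HX : inhabited X) (V : (X -> K) -> Prop)
  (HV : @functional_bsemimodule K X V) :
  @kernel_theorem_holds K X V <->
  @integral_in K X (X -> K) V (@padd K X) (@pact K X) V (fun f : X -> K => f).
Proof.
  split.
  - intro Hker.
    pose (W := mkW HV).
    pose (A := fun f : X -> K =>
      match excluded_middle_informative (V f) with
      | left H => exist V f H | right _ => wzero HV end : Wc V).
    assert (Aspec : forall f, V f -> proj1_sig (A f) = f).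
    { intros f Hf; unfold A; destruct (excluded_middle_informative (V f)); [reflexivity|contradiction]. }
    pose proof HV as (Hadd & Hact & Hz & Hbc & Hq & Hk & Hemb).
    assert (HW : b_complete_semimodule W).
    { split; [|split].
      - intros S HS. apply (proj1 (bnd_tr HV S)) in HS.
        destruct (Hbc (image (@proj1_sig _ _) S)) as [s Hs]; auto.
        { intros g [w [_ ->]]; exact (proj2_sig w). }
        exists (exist _ s (lub_in_P Hs)). apply lub_tr; exact Hs.
      - intros Q q x HQ Hql. apply lub_tr. simpl.
        eapply lub_ext; [|apply (Hq Q q (proj1_sig x) (proj2_sig x) HQ Hql)].
        intro g; split.
        + intros [k [HQk ->]]. exists (wact HV k x); split; [exists k; auto|reflexivity].
        + intros [w [[k [HQk ->]] ->]]. exists k; auto.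
      - intros k S s HS Hs. apply (proj1 (bnd_tr HV S)) in HS. apply (proj1 (lub_tr HV S s)) in Hs.
        apply lub_tr. simpl.
        eapply lub_ext; [|apply (Hk k _ _ (fun g Hg => match Hg with ex_intro _ w (conj _ e) => eq_ind_r V (proj2_sig w) e end) HS Hs)].
        intro g; split.
        + intros [h [[w [Hw ->]] ->]]. exists (wact HV k w); split; [exists w; auto|reflexivity].
        + intros [w [[w' [Hw' ->]] ->]]. exists (proj1_sig w'); split; [exists w'; auto|reflexivity]. }
    assert (HA : b_linear V W A).
    { split; [|split].
      - intros f g Hf Hg. apply wext. simpl. rewrite !Aspec; auto.
      - intros k f Hf. apply wext. simpl. rewrite !Aspec; auto.
      - intros S s HSV HS Hs. apply lub_tr. rewrite Aspec by exact (lub_in_P Hs).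
        eapply lub_ext; [|exact Hs]. intro g; split.
        + intros Sg. exists (A g); split; [exists g; auto|symmetry; apply Aspec; auto].
        + intros [w [[f [Sf ->]] ->]]. rewrite Aspec; auto. }
    destruct (Hker W HW A HA) as [k [_ Hkf]].
    exists (fun x => proj1_sig (k x)); split; [intro x; exact (proj2_sig (k x))|].
    intros f Hf. destruct (Hkf f Hf) as [Hb Hl]. simpl in Hb, Hl.
    assert (E : forall g, image (@proj1_sig _ _) (fun w => exists x, w = wact HV (f x) (k x)) g <->
                      (exists x, g = pact _ (f x) (proj1_sig (k x)))).
    { intro g; split.
      - intros [w [[x ->] ->]]; exists x; reflexivity.
      - intros [x ->]; exists (wact HV (f x) (k x)); split; [exists x|]; reflexivity. }
    split.
    + eapply bnd_ext; [exact E|]. exact (proj1 (bnd_tr HV _) Hb).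
    + eapply lub_ext; [exact E|]. pose proof (proj1 (lub_tr HV _ _) Hl) as Hl'. rewrite (Aspec f Hf) in Hl'. exact Hl'.
  - intros [k [Hk Hkf]] W HW A [HAadd [HAact HAlub]].
    exists (fun x => A (k x)); split; [intro; exact I|].
    intros f Hf. destruct (Hkf f Hf) as [Hb Hl]. simpl in Hb, Hl.
    set (T := fun g => exists x, g = pact _ (f x) (k x)) in *.
    assert (HTV : subset_of K T V).
    { intros g [x ->]; apply (proj1 (proj2 HV)); auto. }
    pose proof (HAlub T f HTV Hb Hl) as HL.
    assert (E : forall w, image A T w <-> (exists x, w = sm_act W (f x) (A (k x)))).
    { intro w; split.
      - intros [g [[x ->] ->]]; exists x; apply HAact; auto.
      - intros [x ->]; exists (pact _ (f x) (k x)); split; [exists x; auto|symmetry; apply HAact; auto]. }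
    simpl; split.
    + exists (A f); split; [exact I|]. intros w Hw. apply (proj1 HL). apply E; auto.
    + eapply lub_ext; [exact E|exact HL].
Qed.
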